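(* Let the joint distribution of observable random variables $(Y,D)$ on $\mathbb R\times\{0,1\}$ be given, and let $\nu$ be a probability distribution on $\mathbb R^2$. For a Borel set $A\subseteq\mathbb R^2$ define $U_{A,1}=\{y\in\mathbb R: ((-\infty,y]\times\{y\})\cap A\neq\varnothing\}$, $U_{A,0}=\{y\in\mathbb R:(\{y\}\times(-\infty,y])\cap A\neq\varnothing\}$, $L_{A,1}=\{y\in\mathbb R:(-\infty,y]\times\{y\}\subseteq A\}$, $L_{A,0}=\{y\in\mathbb R:\{y\}\times(-\infty,y]\subseteq A\}$. Then $\nu$ satisfies, for every Borel $A\subseteq\mathbb R^2$, $$\mathbb P(Y\in L_{A,0},D=0)+\mathbb P(Y\in L_{A,1},D=1)\le \nu(A)\le \mathbb P(Y\in U_{A,0},D=0)+\mathbb P(Y\in U_{A,1},D=1)$$ if and only if there exist, on some probability space, random variables $(\tilde Y,\tilde D,Y_0,Y_1)$ with $(\tilde Y,\tilde D)$ distributed as $(Y,D)$ and $(Y_0,Y_1)$ distributed as $\nu$ such that $\tilde Y=Y_1\tilde D+Y_0(1-\tilde D)$ and almost surely $Y_1>Y_0\Rightarrow \tilde D=1$ and $Y_1<Y_0\Rightarrow \tilde D=0$.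
   Context: Roy model: $Y$ is a real observed outcome, $D\in\{0,1\}$ an observed sector indicator, $(Y_0,Y_1)$ real potential outcomes (ordered as $(Y_0,Y_1)$ in $\mathbb R^2$), with $Y=Y_1D+Y_0(1-D)$ and the selection rule $Y_1>Y_0\Rightarrow D=1$, $Y_1<Y_0\Rightarrow D=0$ (unspecified when $Y_1=Y_0$). *)

(* Defs.v *)
From HB Require Import structures.
From mathcomp Require Import all_boot all_order all_algebra.
From mathcomp Require Import all_classical all_reals all_analysis.
Set Implicit Arguments. Unset Strict Implicit. Unset Printing Implicit Defensive.
Import Order.TTheory GRing.Theory Num.Theory.
Local Open Scope classical_set_scope.
Local Open Scope ring_scope.

(* Roy model sets.  A point of R^2 is (y0, y1). *)
Definition U1 {R : realType} (A : set (R * R)) : set R :=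
  [set y | exists x, x <= y /\ A (x, y)].
Definition U0 {R : realType} (A : set (R * R)) : set R :=
  [set y | exists x, x <= y /\ A (y, x)].
Definition L1 {R : realType} (A : set (R * R)) : set R :=
  [set y | forall x, x <= y -> A (x, y)].
Definition L0 {R : realType} (A : set (R * R)) : set R :=
  [set y | forall x, x <= y -> A (y, x)].

Definition outer_meas d (T : measurableType d) (R : realType)
  (mu : set T -> \bar R) (S : set T) : \bar R :=
  ereal_inf [set mu B | B in [set B | measurable B /\ S `<=` B]].
Definition inner_meas d (T : measurableType d) (R : realType)
  (mu : set T -> \bar R) (S : set T) : \bar R :=
  ereal_sup [set mu B | B in [set B | measurable B /\ B `<=` S]].

Definition YD_event {R : realType} (S : set R) (b : bool) : set (R * bool) :=
  [set p | S p.1 /\ p.2 = b].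

(* Main.v *)
Require Import Defs.
From HB Require Import structures.
From mathcomp Require Import all_boot all_order all_algebra.
From mathcomp Require Import all_classical all_reals all_analysis.
From mathcomp Require Import measurable_realfun lra.
Import Order.TTheory GRing.Theory Num.Theory.
Local Open Scope classical_set_scope.
Local Open Scope ring_scope.
Local Open Scope ereal_scope.

Module H3.
Set Implicit Arguments. Unset Strict Implicit. Unset Printing Implicit Defensive.

Section pre.
Context d1 d2 (T1 : measurableType d1) (T2 : measurableType d2) (R : realType).
Definition preM (m : {measure set T1 -> \bar R}) (D : set T1) (f : T1 -> T2)
  & (measurable D /\ measurable_fun setT f) : set T2 -> \bar R :=
  fun B => m (D `&` f @^-1` B).
Variables (m : {measure set T1 -> \bar R}) (D : set T1) (f : T1 -> T2)
  (H : measurable D /\ measurable_fun setT f).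
Lemma mpre B : measurable B -> measurable (D `&` f @^-1` B).
Proof.
move=> mB; case: H => mD mf; apply: measurableI => //.
rewrite -(setTI (f @^-1` B)); exact: mf.
Qed.
Let pre0 : preM m H set0 = 0.
Proof. by rewrite /preM preimage_set0 setI0 measure0. Qed.
Let pre_ge0 B : 0 <= preM m H B.
Proof. exact: measure_ge0. Qed.
Let pre_sa : semi_sigma_additive (preM m H).
Proof.
move=> F mF tF mUF; rewrite /preM preimage_bigcup setI_bigcupr.
apply: measure_semi_sigma_additive.
- by move=> n; exact: mpre.
- apply/trivIsetP => i j _ _ ij; rewrite setIACA setIid -preimage_setI.
  by move/trivIsetP : tF => /(_ _ _ _ _ ij) ->//; rewrite preimage_set0 setI0.
- rewrite -setI_bigcupr -preimage_bigcup; exact: mpre.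
Qed.
HB.instance Definition _ := isMeasure.Build _ _ _ (preM m H) pre0 pre_ge0 pre_sa.
End pre.

Section qd.
Context d (T : measurableType d) (R : realType).
Definition qd_hyp (mu a : set T -> \bar R) :=
  [/\ mu set0 = 0, a set0 = 0, semi_sigma_additive mu, semi_sigma_additive a &
   forall B, measurable B -> [/\ mu B \is a fin_num, a B \is a fin_num & a B <= mu B]].
Definition qd (mu a : set T -> \bar R) & qd_hyp mu a : set T -> \bar R :=
  fun B => if `[< measurable B >] then mu B - a B else 0.
Variables (mu a : set T -> \bar R) (H : qd_hyp mu a).
Lemma qdE B : measurable B -> qd H B = mu B - a B.
Proof. by move=> mB; rewrite /qd asboolT. Qed.
Let qd0 : qd H set0 = 0.
Proof. by rewrite qdE //; case: H => m0 a0 *; rewrite m0 a0 subee. Qed.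
Let qd_ge0 B : 0 <= qd H B.
Proof.
rewrite /qd; case: asboolP => // mB; have [_ _ _ _ /(_ _ mB) [? ? ?]] := H.
by rewrite subre_ge0.
Qed.
Let qd_sa : semi_sigma_additive (qd H).
Proof.
move=> F mF tF mUF; have [_ _ smu sa hf] := H.
rewrite qdE //.
have -> : (fun n => \sum_(0 <= i < n) qd H (F i)) =
   (fun n => \sum_(0 <= i < n) mu (F i)) \- (fun n => \sum_(0 <= i < n) a (F i)).
  apply/funext => n /=; rewrite -sumeN; last first.
    by move=> i j _ _; apply: fin_num_adde_defl; case: (hf _ (mF j)) => _ ->.
  rewrite -big_split /=; apply: eq_bigr => i _; by rewrite qdE.
apply: cvgeB; first by apply: fin_num_adde_defl; rewrite fin_numN; case: (hf _ mUF) => _ ->.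
- exact: smu.
- exact: sa.
Qed.
HB.instance Definition _ := isMeasure.Build _ _ _ (qd H) qd0 qd_ge0 qd_sa.
End qd.

Lemma outer_le d (T : measurableType d) (R : realType) (mu : set T -> \bar R)
  (S C : set T) : measurable C -> S `<=` C -> outer_meas mu S <= mu C.
Proof. by move=> mC SC; apply: ge_ereal_inf; exists (mu C) => //; exists C. Qed.

Lemma inner_ge d (T : measurableType d) (R : realType) (mu : set T -> \bar R)
  (S B : set T) : measurable B -> B `<=` S -> mu B <= inner_meas mu S.
Proof. by move=> mB BS; apply: le_ereal_sup_tmp; exists (mu B) => //; exists B. Qed.

Lemma fin_ex (R : realType) (x : \bar R) : x \is a fin_num -> exists r : R, x = r%:E.
Proof. by move=> fx; exists (fine x); rewrite fineK. Qed.

Lemma prob_fin d (T : measurableType d) (R : realType) (P : probability T R) A :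
  measurable A -> P A \is a fin_num.
Proof.
move=> mA; rewrite ge0_fin_numE ?measure_ge0 //.
by apply: (le_lt_trans (probability_le1 P mA)); rewrite ltry.
Qed.

Section forward.
Context (R : realType) (PYD : probability (R * bool)%type R)
  (nu : probability (R * R)%type R).

Definition S1 : set (R * R) := [set p | (p.1 < p.2)%R].
Definition S0 : set (R * R) := [set p | (p.2 < p.1)%R].
Definition Dg : set (R * R) := [set p | p.1 = p.2].

Lemma mS1 : measurable S1.
Proof.
have := @measurable_fun_ltr _ _ R setT fst snd measurable_fst measurable_snd measurableT [set true].
by rewrite setTI; apply.
Qed.
Lemma mS0 : measurable S0.
Proof.
have := @measurable_fun_ltr _ _ R setT snd fst measurable_snd measurable_fst measurableT [set true].
by rewrite setTI; apply.
Qed.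
Lemma mDg : measurable Dg.
Proof.
have -> : Dg = ~` (S1 `|` S0).
  apply/seteqP; split => -[x y] /=; rewrite /Dg /S1 /S0 /=.
    by move=> -> [] /=; rewrite ltxx.
  move=> /not_orP [/negP h1 /negP h2]; apply/eqP; rewrite eq_le !leNgt h1 h2.
  done.
by apply: measurableC; apply: measurableU; [exact: mS1|exact: mS0].
Qed.
Lemma mDb (b : bool) : measurable [set p : R * bool | p.2 = b].
Proof.
have := @measurable_snd _ _ R bool measurableT [set b].
by rewrite setTI; apply.
Qed.

Definition HS1 : measurable S1 /\ measurable_fun setT (@snd R R) := conj mS1 measurable_snd.
Definition HS0 : measurable S0 /\ measurable_fun setT (@fst R R) := conj mS0 measurable_fst.
Definition HDg : measurable Dg /\ measurable_fun setT (@fst R R) := conj mDg measurable_fst.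
Definition HDb b : measurable [set p : R * bool | p.2 = b] /\ measurable_fun setT (@fst R bool) :=
  conj (mDb b) measurable_fst.

Definition a1 := preM nu HS1.
Definition a0 := preM nu HS0.
Definition mD := preM nu HDg.
Definition mu1 := preM PYD (HDb true).
Definition mu0 := preM PYD (HDb false).

Lemma mubE b B : preM PYD (HDb b) B = PYD (YD_event B b).
Proof. by rewrite /preM /YD_event setIC. Qed.

Lemma preM_fin d (T : measurableType d) d' (T' : measurableType d') (P : probability T R)
  (D : set T) (f : T -> T') (H : measurable D /\ measurable_fun setT f) B :
  measurable B -> preM P H B \is a fin_num.
Proof. by move=> mB; apply: prob_fin; exact: mpre. Qed.


Lemma mYD (B : set R) b : measurable B -> measurable (YD_event B b).
Proof. by move=> mB; have := mpre (HDb b) mB; rewrite setIC. Qed.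

Variable Hyp : forall A : set (R * R), measurable A ->
     inner_meas PYD (YD_event (L0 A) false) + inner_meas PYD (YD_event (L1 A) true)
       <= nu A /\
     nu A <= outer_meas PYD (YD_event (U0 A) false) + outer_meas PYD (YD_event (U1 A) true).

Lemma fact1 B : measurable B -> a1 B <= mu1 B.
Proof.
move=> mB; set A := S1 `&` snd @^-1` B.
have mA : measurable A := mpre HS1 mB.
have [_ h] := Hyp mA.
rewrite /mu1 mubE; apply: (le_trans h).
apply: (@le_trans _ _ (PYD set0 + PYD (YD_event B true))); last first.
  by rewrite measure0 add0e.
apply: leeD; [apply: (outer_le _ measurable0)|apply: (outer_le _ (mYD _ mB))].
- move=> [y b] /= [[x [xy [Hlt _]]] _] /=.
  by move: xy; rewrite leNgt Hlt.
- by move=> [y b] /= [[x [xy [_ By]]] Hb].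
Qed.

Lemma fact0 B : measurable B -> a0 B <= mu0 B.
Proof.
move=> mB; set A := S0 `&` fst @^-1` B.
have mA : measurable A := mpre HS0 mB.
have [_ h] := Hyp mA.
rewrite /mu0 mubE; apply: (le_trans h).
apply: (@le_trans _ _ (PYD (YD_event B false) + PYD set0)); last first.
  by rewrite measure0 adde0.
apply: leeD; [apply: (outer_le _ (mYD _ mB))|apply: (outer_le _ measurable0)].
- by move=> [y b] /= [[x [xy [_ By]]] Hb].
- move=> [y b] /= [[x [xy [Hlt _]]] _] /=.
  by move: xy; rewrite leNgt Hlt.
Qed.

Lemma fact3 B : measurable B -> mu0 B + mu1 B = a1 B + a0 B + mD B.
Proof.
move=> mB.
set A1 := S1 `&` snd @^-1` B; set A0 := S0 `&` fst @^-1` B.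
set A2 := Dg `&` fst @^-1` B.
have mA1 : measurable A1 := mpre HS1 mB.
have mA0 : measurable A0 := mpre HS0 mB.
have mA2 : measurable A2 := mpre HDg mB.
set A := A1 `|` A0 `|` A2.
have mA : measurable A by apply: measurableU => //; exact: measurableU.
have nuA : nu A = a1 B + a0 B + mD B.
  have mA10 : measurable (A1 `|` A0) by exact: measurableU.
  rewrite (measureU nu mA10 mA2); last first.
    apply/seteqP; split => // -[x y] [[[h1 _]|[h1 _]] [h2 _]];
      rewrite /Dg /= in h2; by move: h1; rewrite /S1 /S0 /= h2 ltxx.
  rewrite (measureU nu mA1 mA0) //.
  apply/seteqP; split => // -[x y] [[h1 _] [h2 _]].
  by move: (lt_trans h1 h2); rewrite ltxx.
rewrite -nuA; have [h1 h2] := Hyp mA.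
apply/le_anti/andP; split.
  apply: le_trans h1; rewrite /mu0 /mu1 !mubE; apply: leeD; apply: inner_ge; try exact: (mYD _ mB).
  - move=> [y b] /= [By Hb]; split => //= x; rewrite le_eqVlt => /orP [/eqP -> | lt].
      by right.
    by left; right.
  - move=> [y b] /= [By Hb]; split => //= x; rewrite le_eqVlt => /orP [/eqP -> | lt].
      by right.
    by left; left.
apply: (le_trans h2); rewrite /mu0 /mu1 !mubE; apply: leeD; apply: outer_le; try exact: (mYD _ mB).
- move=> [y b] /= [[x [xy HA]] Hb]; split => //.
  case: HA => [[[lt _]|[_ By]]|[_ By]] //.
  by move: xy; rewrite leNgt lt.
- move=> [y b] /= [[x [xy HA]] Hb]; split => //.
  case: HA => [[[_ By]|[lt _]]|[eq Bx]] //.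
    by move: xy; rewrite leNgt lt.
  rewrite /Dg /= in eq; by move: Bx; rewrite /= eq.
Qed.


Lemma qh1 : qd_hyp mu1 a1.
Proof.
split; [exact: measure0|exact: measure0|exact: measure_semi_sigma_additive|
  exact: measure_semi_sigma_additive|].
move=> B mB; split; [exact: preM_fin|exact: preM_fin|exact: fact1].
Qed.
Lemma qh0 : qd_hyp mu0 a0.
Proof.
split; [exact: measure0|exact: measure0|exact: measure_semi_sigma_additive|
  exact: measure_semi_sigma_additive|].
move=> B mB; split; [exact: preM_fin|exact: preM_fin|exact: fact0].
Qed.
Definition q1 := qd qh1.
Definition q0 := qd qh0.

Lemma qsum B : measurable B -> q1 B + q0 B = mD B.
Proof.
move=> mB; rewrite /q1 /q0 !qdE //; have := fact3 mB.
have [x0 ->] : exists r, mu0 B = r%:E by apply: fin_ex; exact: preM_fin.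
have [x1 ->] : exists r, mu1 B = r%:E by apply: fin_ex; exact: preM_fin.
have [y0 ->] : exists r, a0 B = r%:E by apply: fin_ex; exact: preM_fin.
have [y1 ->] : exists r, a1 B = r%:E by apply: fin_ex; exact: preM_fin.
have [z ->] : exists r, mD B = r%:E by apply: fin_ex; exact: preM_fin.
rewrite -!EFinD => -[h]; congr EFin; lra.
Qed.

Lemma partition E : measurable E ->
  nu (S1 `&` E) + nu (S0 `&` E) + nu (Dg `&` E) = nu E.
Proof.
move=> mE.
have m1 : measurable (S1 `&` E) by apply: measurableI => //; exact: mS1.
have m0 : measurable (S0 `&` E) by apply: measurableI => //; exact: mS0.
have m2 : measurable (Dg `&` E) by apply: measurableI => //; exact: mDg.
have m10 : measurable ((S1 `&` E) `|` (S0 `&` E)) by exact: measurableU.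
rewrite -(measureU nu m1 m0); last first.
  apply/seteqP; split => // -[x y] [[h1 _] [h2 _]].
  by move: (lt_trans h1 h2); rewrite ltxx.
rewrite -(measureU nu m10 m2); last first.
  apply/seteqP; split => // -[x y] [[[h1 _]|[h1 _]] [h2 _]];
    rewrite /Dg /= in h2; by move: h1; rewrite /S1 /S0 /= h2 ltxx.
congr (nu _); apply/seteqP; split.
  by move=> p [[[_ ?]|[_ ?]]|[_ ?]].
move=> [x y] Exy; rewrite /S1 /S0 /Dg /=.
case: (ltgtP x y) => h.
- by left; left.
- by left; right.
- by right.
Qed.

Definition T := ((R * R) * bool)%type.
Definition f1 (p : R * R) : T := (p, true).
Definition f0 (p : R * R) : T := (p, false).
Definition g1 (y : R) : T := ((y, y), true).
Definition g0 (y : R) : T := ((y, y), false).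

Lemma mf1 : measurable_fun setT f1.
Proof. exact: measurable_fun_pair. Qed.
Lemma mf0 : measurable_fun setT f0.
Proof. exact: measurable_fun_pair. Qed.
Lemma mg1 : measurable_fun setT g1.
Proof. apply: measurable_fun_pair => //; apply: measurable_fun_pair => //. Qed.
Lemma mg0 : measurable_fun setT g0.
Proof. apply: measurable_fun_pair => //; apply: measurable_fun_pair => //. Qed.

Definition Hf1 := conj mS1 mf1.
Definition Hf0 := conj mS0 mf0.
Definition Hg1 := conj (@measurableT _ R) mg1.
Definition Hg0 := conj (@measurableT _ R) mg0.

Definition Pm := measure_add (measure_add (preM nu Hf1) (preM nu Hf0))
   (measure_add (preM q1 Hg1) (preM q0 Hg0)).

Lemma PmE E : Pm E = nu (S1 `&` f1 @^-1` E) + nu (S0 `&` f0 @^-1` E)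
  + (q1 (setT `&` g1 @^-1` E) + q0 (setT `&` g0 @^-1` E)).
Proof. rewrite /Pm measure_addE; congr (_ + _); exact: measure_addE. Qed.

Lemma Pm1 : Pm setT = 1.
Proof.
rewrite PmE !preimage_setT !setIT qsum //.
have -> : mD setT = nu (Dg `&` setT) by rewrite /mD /preM preimage_setT.
have := partition measurableT; rewrite !setIT => ->.
exact: probability_setT.
Qed.


HB.instance Definition _ := Measure.on Pm.
HB.instance Definition _ := Measure_isProbability.Build _ _ _ Pm Pm1.

Definition Y0 (t : T) : R := t.1.1.
Definition Y1 (t : T) : R := t.1.2.
Definition Dt (t : T) : bool := t.2.
Definition Yt (t : T) : R := if Dt t then Y1 t else Y0 t.

Lemma marg01 E : measurable E -> Pm ((fun t => (Y0 t, Y1 t)) @^-1` E) = nu E.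
Proof.
move=> mE; rewrite PmE.
have e1 : f1 @^-1` ((fun t => (Y0 t, Y1 t)) @^-1` E) = E.
  by apply/seteqP; split => -[x y].
have e0 : f0 @^-1` ((fun t => (Y0 t, Y1 t)) @^-1` E) = E.
  by apply/seteqP; split => -[x y].
rewrite e1 e0 !setTI.
set Ed := g1 @^-1` _.
have mEd : measurable Ed.
  have := @measurable_fun_pair _ _ _ R R R (fun y => y) (fun y => y)
    (@measurable_id _ R setT) (@measurable_id _ R setT) measurableT E mE.
  by rewrite setTI.
rewrite qsum //.
have -> : mD Ed = nu (Dg `&` E).
  rewrite /mD /preM; congr (nu _); apply/seteqP; split => -[x y] [h1 h2];
    rewrite /Dg /= in h1; subst y; by split.
exact: partition.
Qed.


Lemma margYD B : measurable B -> Pm ((fun t => (Yt t, Dt t)) @^-1` B) = PYD B.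
Proof.
move=> mB; rewrite PmE !setTI.
set Bt := [set y : R | B (y, true)]; set Bf := [set y : R | B (y, false)].
have mBt : measurable Bt.
  have := @measurable_fun_pair _ _ _ R R bool (fun y => y) (fun=> true)
    (@measurable_id _ R setT) (measurable_cst _) measurableT B mB.
  by rewrite setTI.
have mBf : measurable Bf.
  have := @measurable_fun_pair _ _ _ R R bool (fun y => y) (fun=> false)
    (@measurable_id _ R setT) (measurable_cst _) measurableT B mB.
  by rewrite setTI.
have -> : nu (S1 `&` f1 @^-1` ((fun t => (Yt t, Dt t)) @^-1` B)) = a1 Bt by [].
have -> : nu (S0 `&` f0 @^-1` ((fun t => (Yt t, Dt t)) @^-1` B)) = a0 Bf by [].
have -> : q1 (g1 @^-1` ((fun t => (Yt t, Dt t)) @^-1` B)) = q1 Bt by [].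
have -> : q0 (g0 @^-1` ((fun t => (Yt t, Dt t)) @^-1` B)) = q0 Bf by [].
have -> : PYD B = mu1 Bt + mu0 Bf.
  rewrite /mu1 /mu0 !mubE -measureU; [|exact: mYD|exact: mYD|]; last first.
    by apply/seteqP; split => // -[y b] [[_ h1] [_ h2]]; rewrite h1 in h2.
  congr (PYD _); apply/seteqP; split.
    by move=> [y [|]] Bp; [left|right].
  by move=> [y b] [[Bp hb]|[Bp hb]]; simpl in hb; subst b.
rewrite /q1 /q0 !qdE //.
have [x0 ->] : exists r, mu0 Bf = r%:E by apply: fin_ex; exact: preM_fin.
have [x1 ->] : exists r, mu1 Bt = r%:E by apply: fin_ex; exact: preM_fin.
have [y0 ->] : exists r, a0 Bf = r%:E by apply: fin_ex; exact: preM_fin.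
have [y1 ->] : exists r, a1 Bt = r%:E by apply: fin_ex; exact: preM_fin.
rewrite -!EFinD; congr EFin; lra.
Qed.

Definition N : set T := (fst @^-1` S1 `&` snd @^-1` [set false]) `|`
   (fst @^-1` S0 `&` snd @^-1` [set true]).

Lemma mN : measurable N.
Proof.
have h1 := @measurable_fst _ _ (R * R)%type bool measurableT S1 mS1.
have h0 := @measurable_fst _ _ (R * R)%type bool measurableT S0 mS0.
rewrite setTI in h1; rewrite setTI in h0.
have b1 := @measurable_snd _ _ (R * R)%type bool measurableT [set true] I.
have b0 := @measurable_snd _ _ (R * R)%type bool measurableT [set false] I.
rewrite setTI in b1; rewrite setTI in b0.
by apply: measurableU; apply: measurableI.
Qed.

Lemma PmN : Pm N = 0.
Proof.
rewrite PmE.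
have -> : S1 `&` f1 @^-1` N = set0.
  apply/seteqP; split => // -[x y] [h [[_ //]|[h' _]]].
  by move: (lt_trans h h'); rewrite ltxx.
have -> : S0 `&` f0 @^-1` N = set0.
  apply/seteqP; split => // -[x y] [h [[h' _]|[_ //]]].
  by move: (lt_trans h h'); rewrite ltxx.
have -> : setT `&` g1 @^-1` N = set0.
  apply/seteqP; split => // y [_ [[h _]|[h _]]];
    by move: h; rewrite /S1 /S0 /= ltxx.
have -> : setT `&` g0 @^-1` N = set0.
  apply/seteqP; split => // y [_ [[h _]|[h _]]];
    by move: h; rewrite /S1 /S0 /= ltxx.
rewrite measure0 /q1 /q0 !qdE // /mu1 /mu0 /a1 /a0 /preM !preimage_set0 !setI0 !measure0. by rewrite !oppe0 !adde0.
Qed.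

Lemma ae_good : {ae Pm, forall t, ((Y0 t < Y1 t)%R -> Dt t = true) /\
                         ((Y1 t < Y0 t)%R -> Dt t = false)}.
Proof.
exists N; split; [exact: mN|exact: PmN|].
move=> [[x y] b]; rewrite /Y0 /Y1 /Dt /= => H.
case: b H => H.
- right; split => //; case: (ltP y x) => // hyx; exfalso; apply: H; split => // h.
  by move: hyx; rewrite leNgt h.
- left; split => //; case: (ltP x y) => // hyx; exfalso; apply: H; split => // h.
  by move: hyx; rewrite leNgt h.
Qed.

Lemma mYY : measurable_fun setT (fun t => (Y0 t, Y1 t)).
Proof.
apply: measurable_fun_pair.
- exact: (measurableT_comp measurable_fst measurable_fst).
- exact: (measurableT_comp measurable_snd measurable_fst).
Qed.

Lemma mYD' : measurable_fun setT (fun t => (Yt t, Dt t)).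
Proof.
apply: measurable_fun_pair; last exact: measurable_snd.
apply: measurable_fun_ifT; first exact: measurable_snd.
- exact: (measurableT_comp measurable_snd measurable_fst).
- exact: (measurableT_comp measurable_fst measurable_fst).
Qed.



Lemma forward :
  exists (d : measure_display) (T : measurableType d) (P : probability T R)
         (Yt : T -> R) (Dt : T -> bool) (Y0 Y1 : T -> R),
    [/\ measurable_fun setT (fun t => (Yt t, Dt t)) /\
        measurable_fun setT (fun t => (Y0 t, Y1 t)),
        (forall B : set (R * bool), measurable B ->
           P ((fun t => (Yt t, Dt t)) @^-1` B) = PYD B),
        (forall B : set (R * R), measurable B ->
           P ((fun t => (Y0 t, Y1 t)) @^-1` B) = nu B),
        (forall t, Yt t = (if Dt t then Y1 t else Y0 t)%R) &
        {ae P, forall t, ((Y0 t < Y1 t)%R -> Dt t = true) /\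
                         ((Y1 t < Y0 t)%R -> Dt t = false)}].
Proof.
exists _, T, (@Probability.clone _ _ _ Pm _), Yt, Dt, Y0, Y1; split.
- by split; [exact: mYD'|exact: mYY].
- exact: margYD.
- exact: marg01.
- by [].
- exact: ae_good.
Qed.

End forward.

Lemma sup_sum_le (R : realType) (X Y : set (\bar R)) (c : \bar R) x0 y0 :
  X x0 -> Y y0 -> (forall x, X x -> x \is a fin_num) ->
  (forall y, Y y -> y \is a fin_num) ->
  (forall x y, X x -> Y y -> x + y <= c) -> c \is a fin_num ->
  ereal_sup X + ereal_sup Y <= c.
Proof.
move=> Xx0 Yy0 fX fY H fc.
have hY x : X x -> ereal_sup Y <= c - x.
  move=> Xx; apply: ge_ereal_sup => y Yy; rewrite leeBrDr ?fX // addeC; exact: H.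
have fsY : ereal_sup Y \is a fin_num.
  rewrite fin_numElt; apply/andP; split.
  - apply: (lt_le_trans _ (ereal_sup_ubound Yy0)).
    by move: (fY _ Yy0); rewrite fin_numElt => /andP[].
  - apply: (le_lt_trans (hY _ Xx0)).
    have : c - x0 \is a fin_num by rewrite fin_numB fc fX.
    by rewrite fin_numElt => /andP[].
rewrite -leeBrDr //; apply: ge_ereal_sup => x Xx.
rewrite leeBrDl // -leeBrDr ?fX //; exact: hY.
Qed.

Lemma inf_sum_ge (R : realType) (X Y : set (\bar R)) (c : \bar R) x0 y0 :
  X x0 -> Y y0 -> (forall x, X x -> x \is a fin_num) ->
  (forall y, Y y -> y \is a fin_num) ->
  (forall x y, X x -> Y y -> c <= x + y) -> c \is a fin_num ->
  c <= ereal_inf X + ereal_inf Y.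
Proof.
move=> Xx0 Yy0 fX fY H fc.
have hY x : X x -> c - x <= ereal_inf Y.
  move=> Xx; apply: le_ereal_inf_tmp => y Yy; rewrite leeBlDr ?fX // addeC; exact: H.
have fsY : ereal_inf Y \is a fin_num.
  rewrite fin_numElt; apply/andP; split.
  - apply: (lt_le_trans _ (hY _ Xx0)).
    have : c - x0 \is a fin_num by rewrite fin_numB fc fX.
    by rewrite fin_numElt => /andP[].
  - apply: (le_lt_trans (ereal_inf_lbound Yy0)).
    by move: (fY _ Yy0); rewrite fin_numElt => /andP[].
rewrite -leeBlDr //; apply: le_ereal_inf_tmp => x Xx.
rewrite leeBlDr // addeC -leeBlDr ?fX //; exact: hY.
Qed.

Lemma eq0_le (R : realType) (x : \bar R) : x = 0 -> x <= 0.
Proof. by move=> ->. Qed.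

Lemma backward (R : realType) (PYD : probability (R * bool)%type R)
    (nu : probability (R * R)%type R) :
  (exists (d : measure_display) (T : measurableType d) (P : probability T R)
         (Yt : T -> R) (Dt : T -> bool) (Y0 Y1 : T -> R),
    [/\ measurable_fun setT (fun t => (Yt t, Dt t)) /\
        measurable_fun setT (fun t => (Y0 t, Y1 t)),
        (forall B : set (R * bool), measurable B ->
           P ((fun t => (Yt t, Dt t)) @^-1` B) = PYD B),
        (forall B : set (R * R), measurable B ->
           P ((fun t => (Y0 t, Y1 t)) @^-1` B) = nu B),
        (forall t, Yt t = (if Dt t then Y1 t else Y0 t)%R) &
        {ae P, forall t, ((Y0 t < Y1 t)%R -> Dt t = true) /\
                         ((Y1 t < Y0 t)%R -> Dt t = false)}]) ->
  (forall A : set (R * R), measurable A ->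
     inner_meas PYD (YD_event (L0 A) false) + inner_meas PYD (YD_event (L1 A) true)
       <= nu A /\
     nu A <= outer_meas PYD (YD_event (U0 A) false) + outer_meas PYD (YD_event (U1 A) true)).
Proof.
move=> [d [T [P [Yt [Dt [Y0 [Y1 [[mYD mYY] hYD hYY hY [N [mN PN0 sN]]]]]]]]]] A mA.
have mpYY : measurable ((fun t => (Y0 t, Y1 t)) @^-1` A).
  by have := mYY measurableT A mA; rewrite setTI.
have mpYD B : measurable B -> measurable ((fun t => (Yt t, Dt t)) @^-1` B).
  by move=> mB; have := mYD measurableT B mB; rewrite setTI.
have good t : ~ N t -> ((Y0 t < Y1 t)%R -> Dt t = true) /\ ((Y1 t < Y0 t)%R -> Dt t = false).
  by move=> nN; apply: contrapT => ng; apply: nN; exact: sN.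
have fA : nu A \is a fin_num by exact: prob_fin.
split.
- apply: (@sup_sum_le _ _ _ _ (PYD set0) (PYD set0)).
  + by exists set0.
  + by exists set0.
  + by move=> _ [B [mB _] <-]; exact: prob_fin.
  + by move=> _ [B [mB _] <-]; exact: prob_fin.
  + move=> _ _ [B0 [mB0 sB0] <-] [B1 [mB1 sB1] <-].
    rewrite -measureU //; last first.
      apply/seteqP; split => // -[y b] [h0 h1].
      have [_ e0] := sB0 _ h0; have [_ e1] := sB1 _ h1.
      by rewrite e0 in e1.
    have mB01 : measurable (B0 `|` B1) by exact: measurableU.
    apply: (@le_trans _ _ (P ((fun t => (Yt t, Dt t)) @^-1` (B0 `|` B1)))).
      by rewrite (hYD _ mB01).
    apply: (@le_trans _ _ (P ((fun t => (Y0 t, Y1 t)) @^-1` A))); last first.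
      by rewrite (hYY _ mA).
    have mAN : measurable ((fun t => (Y0 t, Y1 t)) @^-1` A `|` N) by exact: measurableU.
    apply: (@le_trans _ _ (P ((fun t => (Y0 t, Y1 t)) @^-1` A `|` N))).
      apply: le_measure; rewrite ?inE; [exact: mpYD|exact: mAN|].
      move=> t [h|h].
      * have [hL hD] := sB0 _ h; simpl in hL, hD.
        case: (pselect (N t)) => Nt; [by right|left].
        have [g1 g0] := good t Nt.
        rewrite hY hD in hL; apply: hL; rewrite leNgt; apply/negP => lt.
        by move: (g1 lt); rewrite hD.
      * have [hL hD] := sB1 _ h; simpl in hL, hD.
        case: (pselect (N t)) => Nt; [by right|left].
        have [g1 g0] := good t Nt.
        rewrite hY hD in hL; apply: hL; rewrite leNgt; apply/negP => lt.
        by move: (g0 lt); rewrite hD.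
    apply: (le_trans (measureU2 P mpYY mN)).
    rewrite -[X in _ <= X]adde0; apply: leeD => //; exact: (eq0_le PN0).
  + exact: fA.
- apply: (@inf_sum_ge _ _ _ _ (PYD setT) (PYD setT)).
  + by exists setT.
  + by exists setT.
  + by move=> _ [B [mB _] <-]; exact: prob_fin.
  + by move=> _ [B [mB _] <-]; exact: prob_fin.
  + move=> _ _ [C0 [mC0 sC0] <-] [C1 [mC1 sC1] <-].
    have mC01 : measurable (C0 `|` C1) by exact: measurableU.
    apply: (le_trans _ (measureU2 PYD mC0 mC1)).
    apply: (@le_trans _ _ (P ((fun t => (Yt t, Dt t)) @^-1` (C0 `|` C1)))); last first.
      by rewrite (hYD _ mC01).
    apply: (@le_trans _ _ (P ((fun t => (Y0 t, Y1 t)) @^-1` A))).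
      by rewrite (hYY _ mA).
    have mCN : measurable ((fun t => (Yt t, Dt t)) @^-1` (C0 `|` C1) `|` N)
      by apply: measurableU => //; exact: mpYD.
    apply: (@le_trans _ _ (P ((fun t => (Yt t, Dt t)) @^-1` (C0 `|` C1) `|` N))).
      apply: le_measure; rewrite ?inE; [exact: mpYY|exact: mCN|].
      move=> t At.
      case: (pselect (N t)) => Nt; [by right|left].
      have [g1 g0] := good t Nt.
      case hD: (Dt t).
      * right; apply: sC1; split; last exact: hD.
        rewrite /= hY hD; exists (Y0 t); split => //.
        rewrite leNgt; apply/negP => lt; by move: (g0 lt); rewrite hD.
      * left; apply: sC0; split; last exact: hD.
        rewrite /= hY hD; exists (Y1 t); split => //.
        rewrite leNgt; apply/negP => lt; by move: (g1 lt); rewrite hD.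
    apply: (le_trans (measureU2 P (mpYD _ mC01) mN)).
    rewrite -[X in _ <= X]adde0; apply: leeD => //; exact: (eq0_le PN0).
  + exact: fA.
Qed.

End H3.

Unset Implicit Arguments.
Theorem theorem3 (R : realType) (PYD : probability (R * bool)%type R)
    (nu : probability (R * R)%type R) :
  (forall A : set (R * R), measurable A ->
     inner_meas PYD (YD_event (L0 A) false) + inner_meas PYD (YD_event (L1 A) true)
       <= nu A /\
     nu A <= outer_meas PYD (YD_event (U0 A) false) + outer_meas PYD (YD_event (U1 A) true))
  <->
  exists (d : measure_display) (T : measurableType d) (P : probability T R)
         (Yt : T -> R) (Dt : T -> bool) (Y0 Y1 : T -> R),
    [/\ measurable_fun setT (fun t => (Yt t, Dt t)) /\
        measurable_fun setT (fun t => (Y0 t, Y1 t)),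
        (forall B : set (R * bool), measurable B ->
           P ((fun t => (Yt t, Dt t)) @^-1` B) = PYD B),
        (forall B : set (R * R), measurable B ->
           P ((fun t => (Y0 t, Y1 t)) @^-1` B) = nu B),
        (forall t, Yt t = (if Dt t then Y1 t else Y0 t)%R) &
        {ae P, forall t, ((Y0 t < Y1 t)%R -> Dt t = true) /\
                         ((Y1 t < Y0 t)%R -> Dt t = false)}].
Proof.
split; [exact: H3.forward | exact: H3.backward].
Qed.
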